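(* Let $q$ be a prime power, $m\ge2$, and $\lambda$ a positive divisor of $q+1$ with $\lambda<q+1$; let $n=\frac{q^m+1}{\lambda}$. Then $\mathrm{ord}_n(q)=2m$. Moreover, for every $s\in\mathbb{Z}_n$, the $q$-cyclotomic coset of $s$ modulo $n$ is $C_s=\{y_{s,k},\,n-y_{s,k}:0\le k\le m-1\}$, where $y_{s,k}=sq^k\bmod n$.
   Context: For $0\le s\le n-1$, the $q$-cyclotomic coset of $s$ modulo $n$ is $C_s=\{sq^i\bmod n:0\le i\le \mathrm{ord}_n(q)-1\}$. *)

(* Defs.v *)
From mathcomp Require Import all_boot.
Set Implicit Arguments. Unset Strict Implicit. Unset Printing Implicit Defensive.

(* Multiplicative order of q modulo n: the least k >= 1 with q^k = 1 (mod n).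
   When gcd(q,n) = 1 such k exists and k <= totient n <= n, so searching in
   1..n finds it; if no such k exists we return 0 (never used here). *)
Definition ordn (n q : nat) : nat :=
  nth 0 [seq k <- iota 1 n | q ^ k == 1 %[mod n]] 0.

Definition cyc_coset (n q s : nat) : seq nat :=
  [seq (s * q ^ i) %% n | i <- iota 0 (ordn n q)].

Definition prime_power (q : nat) : Prop :=
  exists p e, prime p /\ 0 < e /\ q = p ^ e.

(* Main.v *)
Require Import Defs.
From mathcomp Require Import all_boot.
From mathcomp Require Import zify.

Lemma ordn_char (n q k : nat) : 0 < k <= n -> q ^ k = 1 %[mod n] ->
  (forall j, 0 < j < k -> q ^ j != 1 %[mod n]) -> ordn n q = k.
Proof.
move=> /andP[k0 kn] Hk Hj; rewrite /ordn.
have -> : iota 1 n = iota 1 k.-1 ++ iota k (1 + (n - k)).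
  have -> : k = 1 + k.-1 by lia.
  by rewrite -iotaD; congr iota; lia.
rewrite filter_cat.
rewrite (@eq_in_filter _ _ pred0); last first.
  move=> x; rewrite mem_iota => /andP[x1 x2] /=.
  apply/negbTE/Hj; lia.
by rewrite filter_pred0 /= Hk eqxx.
Qed.

Lemma mod_neg (n a r : nat) : 0 < n -> r < n -> (a + r) %% n = 0 ->
  a %% n = (n - r) %% n.
Proof.
move=> n0 rn H; apply/eqP; rewrite -(eqn_modDr r) subnK ?(ltnW rn) // modnn H //.
Qed.

Lemma pow_bound m : 2 <= m -> 2 * m <= 2 ^ m.-1 + 2.
Proof.
case: m => [|[|m']] // _; elim: m' => [|m' IH] //=.
move: IH; rewrite !expnS; lia.
Qed.

Theorem lemma5 (q m lam : nat) :
  prime_power q -> 2 <= m ->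
  0 < lam -> lam %| q + 1 -> lam < q + 1 ->
  lam %| q ^ m + 1 ->
  let n := (q ^ m + 1) %/ lam in
  ordn n q = 2 * m /\
  (forall s, s < n ->
     let y := fun k => (s * q ^ k) %% n in
     cyc_coset n q s =i
       [seq y k | k <- iota 0 m] ++ [seq (n - y k) %% n | k <- iota 0 m]).
Proof.
move=> [p [e [pp [e0 qe]]]] m2 l0 ldq llt ldm n.
have q2 : 2 <= q.
  rewrite qe; have p2 := prime_gt1 pp.
  by apply: leq_trans p2 _; rewrite -{1}(expn1 p) (leq_pexp2l (prime_gt0 pp)).
have lq : lam != q.
  apply/eqP=> E; move: ldq; rewrite E dvdn_addr // dvdn1 => /eqP; lia.
have nl : n * lam = q ^ m + 1 by rewrite divnK.
clearbody n.
set P := q ^ m.-1.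
have qmP : q ^ m = q * P by rewrite /P -expnS prednK //; lia.
have Pq : q <= P by rewrite /P -{1}(expn1 q) leq_pexp2l //; lia.
have nP : P + 1 < n.
  rewrite ltnNge; apply/negP => H.
  have : n * lam <= (P + 1) * (q - 1) by apply: leq_mul; lia.
  rewrite nl qmP; nia.
have n0 : 0 < n by lia.
have qjP : forall j, j <= m.-1 -> q ^ j <= P.
  by move=> j jm; rewrite /P leq_pexp2l //; lia.
have qj2 : forall j, 0 < j -> 2 <= q ^ j.
  move=> j j0; apply: leq_trans q2 _; rewrite -{1}(expn1 q) leq_pexp2l //; lia.
have key : forall s k, (s * q ^ (m + k) + s * q ^ k) %% n = 0.
  move=> s k; apply/eqP; change (n %| s * q ^ (m + k) + s * q ^ k).
  have -> : s * q ^ (m + k) + s * q ^ k = (s * q ^ k) * (q ^ m + 1).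
    by rewrite expnD mulnDr muln1 mulnA [in s * q ^ k * q ^ m]mulnAC -mulnA.
  by apply: dvdn_mull; rewrite -nl dvdn_mulr.
have key2 : forall s k, (s * q ^ (m + k)) %% n = (n - (s * q ^ k) %% n) %% n.
  move=> s k; apply: mod_neg => //; first by rewrite ltn_mod.
  by rewrite modnDmr key.
have ord : ordn n q = 2 * m.
  apply: ordn_char.
  - apply/andP; split; first lia.
    have : 2 ^ m.-1 <= P by rewrite /P leq_exp2r //; lia.
    have := pow_bound _ m2.
    lia.
  - have n1 : 1 %% n = 1 by rewrite modn_small //; lia.
    have qm : q ^ m %% n = n - 1.
      by have := key2 1 0; rewrite !mul1n expn0 addn0 n1 => ->; rewrite modn_small //; lia.
    rewrite mul2n -addnn; have := key2 1 m; rewrite !mul1n qm => ->.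
    by rewrite n1 modn_small; lia.
  - have n1 : 1 %% n = 1 by rewrite modn_small //; lia.
    have qm : q ^ m %% n = n - 1.
      by have := key2 1 0; rewrite !mul1n expn0 addn0 n1 => ->; rewrite modn_small //; lia.
    move=> j /andP[j0 j2]; rewrite n1.
    case: (ltngtP j m) => jm.
    + have A := qjP j ltac:(clear -jm m2; lia); have B := qj2 j j0.
      clear key key2 qjP qj2.
      rewrite modn_small; clear -A B nP; lia.
    + have -> : j = m + (j - m) by clear -jm; lia.
      have := key2 1 (j - m); rewrite !mul1n => ->.
      have A := qjP (j - m) ltac:(clear -j2; lia).
      have B := qj2 (j - m) ltac:(clear -jm; lia).
      rewrite (modn_small (m := q ^ (j - m))); last by clear -A nP; lia.
      rewrite modn_small; clear -A B nP; lia.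
    + by rewrite jm qm; clear -nP Pq q2; lia.
split => //.
move=> s sn y x; rewrite /cyc_coset ord mem_cat; apply/mapP/orP.
- case=> i; rewrite mem_iota add0n => /andP[_ i2m] ->.
  case: (ltnP i m) => im.
  + left; apply/mapP; exists i => //; rewrite mem_iota; clear -im; lia.
  + right; apply/mapP; exists (i - m); first by rewrite mem_iota; clear -im i2m; lia.
    rewrite /y -key2; have -> : m + (i - m) = i by clear -im; lia.
    by [].
- case=> /mapP[k]; rewrite mem_iota add0n => /andP[_ km] ->.
  + exists k => //; rewrite mem_iota; clear -km; lia.
  + exists (m + k); first by rewrite mem_iota; clear -km; lia.
    by rewrite /y key2.
Qed.
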